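(* Let $k\ge r\ge3$ and $m\ge0$ be integers. Let $\pi$ be a partition in $\mathbb{C}(k,r)$ with no odd parts, and let $N_2=N_2(\pi)$ be the number of parts marked $2$ in $GG(\pi)$. Then $\pi\in\mathbb{C}_{<}(k,r|m)$ if and only if $m\ge N_2$.
   Context: A partition $\pi=(\pi_1,\dots,\pi_\ell)$ is a finite non-increasing sequence of positive integers; ''$a$ occurs in $\pi$'' means $a=\pi_i$ for some $i$. Göllnitz–Gordon marking: $GG(\pi)$ assigns a positive integer (mark) to each part, processing the parts from smallest to largest; $\pi_i$ receives the smallest positive integer different from the marks of all parts $\pi_g$ with $g>i$ and $\pi_i-\pi_g\le 2$, where $\pi_i-\pi_g<2$ is required when $\pi_i$ is odd. An ''$r$-marked part $a$'' is a part equal to $a$ with mark $r$. $N_i(\pi)$ is the number of parts with mark $i$; $\pi^{(i)}_1\ge\dots\ge\pi^{(i)}_{N_i(\pi)}$ are the parts with mark $i$, with $\pi^{(i)}_0=+\infty$, $\pi^{(i)}_{N_i(\pi)+1}=-\infty$. $\mathbb{C}(k,r)$: partitions with (i) no odd part repeated; (ii) $\pi_i\ge\pi_{i+k-1}+2$ for $1\le i\le\ell-k+1$, strict if $\pi_i$ even; (iii) at most $r-1$ parts $\le 2$. Starting types: for $\pi\in\mathbb{C}(k,r)$ with $N_2=N_2(\pi)\ge1$, let $l$ be the largest integer in $\{0,\dots,N_2\}$ such that no odd part of $\pi$ is $\ge\pi^{(2)}_l$; for $l<i\le N_2$, $\pi^{(2)}_i$ has type $s_{-1}$. For $b=1,\dots,l$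 in increasing order, type and auxiliary $\sigma_b$: for $b=1$: Case 1: 1-marked part $\pi^{(2)}_1-1$ exists and $\pi^{(2)}_1+2$ does not occur: type $s_0$, $\sigma_1=\pi^{(2)}_1-1$; Case 2: 1-marked $\pi^{(2)}_1-2$ exists and $\pi^{(2)}_1+2$ does not occur: type $s_1$, $\sigma_1=\pi^{(2)}_1-2$; Case 3: 1-marked $\pi^{(2)}_1+2$ exists: type $s_2$, $\sigma_1=\pi^{(2)}_1+2$; Case 4: 1-marked $\pi^{(2)}_1$ exists: type $s_3$, $\sigma_1=\pi^{(2)}_1$. For $2\le b\le l$: Case 1: 1-marked $\pi^{(2)}_b-1$ exists and, if a 1-marked $\pi^{(2)}_b+2$ exists, $\sigma_{b-1}=\pi^{(2)}_b+2$: type $s_0$, $\sigma_b=\pi^{(2)}_b-1$; Case 2: same with $\pi^{(2)}_b-2$: type $s_1$, $\sigma_b=\pi^{(2)}_b-2$; Case 3: 1-marked $\pi^{(2)}_b+2$ exists and $\sigma_{b-1}\ne\pi^{(2)}_b+2$: type $s_2$, $\sigma_b=\pi^{(2)}_b+2$; Case 4: 1-marked $\pi^{(2)}_b$ exists: type $s_3$, $\sigma_b=\pi^{(2)}_b$. $\mathbb{C}_{<}(k,r|p,t)$ (for $p,t\ge 0$): the set of $\pi\in\mathbb{C}(k,r)$ such that (1) no odd part is $\ge 2t+1$; (2) $\pi^{(2)}_{p+1}<2t+1<\pi^{(2)}_p$ (in particular $p\le N_2(\pi)$); (3) if $\pi^{(2)}_p=2t+2$ then it is of starting type $s_2$ or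 $s_3$; (4) if $\pi^{(2)}_{p+1}=2t$ then it is of starting type $s_0$ or $s_1$. For $m\ge0$, $\mathbb{C}_{<}(k,r|m)=\bigcup_{p,t\ge0,\ p+t=m}\mathbb{C}_{<}(k,r|p,t)$. *)

(* Defs.v *)
From mathcomp Require Import all_boot.
Set Implicit Arguments. Unset Strict Implicit. Unset Printing Implicit Defensive.

(* A partition is a finite non-increasing sequence of positive integers,
   represented as a seq nat [pi_1; ...; pi_l] (0-based in Rocq). *)
Definition is_partition (s : seq nat) : bool :=
  sorted geq s && all (fun x => 0 < x) s.

Definition mex1 (L : seq nat) : nat :=
  (find (fun n => n \notin L) (iota 1 (size L).+1)).+1.

(* Parts are processed from the smallest (end of the list) to the largest;
   part x (at position i) gets the smallest positive integer different from
   the marks of all later parts y (g > i) with x - y <= 2, resp. x - y < 2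
   when x is odd.  (For a non-increasing list y <= x, so x <= y + 2 is
   x - y <= 2.) *)
Fixpoint gg (s : seq nat) : seq nat :=
  match s with
  | [::] => [::]
  | x :: s' =>
      let ms := gg s' in
      let close y := if odd x then x < y + 2 else x <= y + 2 in
      mex1 [seq q.2 | q <- zip s' ms & close q.1] :: ms
  end.

Definition marked (i : nat) (s : seq nat) : seq nat :=
  [seq q.1 | q <- zip s (gg s) & q.2 == i].

Definition Nmark (i : nat) (s : seq nat) : nat := size (marked i s).

(* pi^{(2)}_j for 1 <= j <= N_2 (1-based) *)
Definition pi2 (s : seq nat) (j : nat) : nat := nth 0 (marked 2 s) j.-1.

Definition has_marked (s : seq nat) (r a : nat) : bool := (a, r) \in zip s (gg s).

Definition inC (k r : nat) (s : seq nat) : Prop :=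
  is_partition s /\
  (forall x, odd x -> count_mem x s <= 1) /\
  (forall i, i + k - 1 < size s ->
      nth 0 s (i + k - 1) + 2 <= nth 0 s i /\
      (~~ odd (nth 0 s i) -> nth 0 s (i + k - 1) + 2 < nth 0 s i)) /\
  count (fun x => x <= 2) s <= r - 1.

Inductive stype := s_m1 | s_0 | s_1 | s_2 | s_3 | s_none.


(* l: the largest j in {0..N_2} such that no odd part is >= pi^{(2)}_j
   (with pi^{(2)}_0 = +oo). *)
Definition okl (s : seq nat) (j : nat) : bool :=
  (j == 0) || all (fun x => odd x ==> (x < pi2 s j)) s.

Definition lidx (s : seq nat) : nat :=
  last 0 [seq j <- iota 0 (Nmark 2 s).+1 | okl s j].

(* The four cases are tried in the order 1, 2, 3, 4 (they are mutually
   exclusive for genuine GG-markings); s_none if no case applies. *)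
Fixpoint stype_sigma (s : seq nat) (b : nat) : stype * nat :=
  match b with
  | 0 => (s_none, 0)
  | b'.+1 =>
      let x := pi2 s b in
      match b' with
      | 0 =>
          if has_marked s 1 (x - 1) && (x + 2 \notin s) then (s_0, x - 1)
          else if has_marked s 1 (x - 2) && (x + 2 \notin s) then (s_1, x - 2)
          else if has_marked s 1 (x + 2) then (s_2, x + 2)
          else if has_marked s 1 x then (s_3, x)
          else (s_none, 0)
      | _ =>
          let sig := (stype_sigma s b').2 in
          let cond := has_marked s 1 (x + 2) ==> (sig == x + 2) in
          if has_marked s 1 (x - 1) && cond then (s_0, x - 1)
          else if has_marked s 1 (x - 2) && cond then (s_1, x - 2)
          else if has_marked s 1 (x + 2) && (sig != x + 2) then (s_2, x + 2)
          else if has_marked s 1 x then (s_3, x)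
          else (s_none, 0)
      end
  end.

Definition start_type (s : seq nat) (b : nat) : stype :=
  if b <= lidx s then (stype_sigma s b).1 else s_m1.

Definition inClt (k r p t : nat) (s : seq nat) : Prop :=
  inC k r s /\
  (forall x, x \in s -> odd x -> x < 2 * t + 1) /\
  (* (2) pi2_{p+1} < 2t+1 < pi2_p, with pi2_0 = +oo, pi2_{N2+1} = -oo *)
  p <= Nmark 2 s /\
  (p = 0 \/ 2 * t + 1 < pi2 s p) /\
  (p = Nmark 2 s \/ pi2 s p.+1 < 2 * t + 1) /\
  (1 <= p -> pi2 s p = 2 * t + 2 ->
     start_type s p = s_2 \/ start_type s p = s_3) /\
  (p.+1 <= Nmark 2 s -> pi2 s p.+1 = 2 * t ->
     start_type s p.+1 = s_0 \/ start_type s p.+1 = s_1).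

Definition inClt_m (k r m : nat) (s : seq nat) : Prop :=
  exists p t, p + t = m /\ inClt k r p t s.

(* Main.v *)
Require Import Defs.
From mathcomp Require Import all_boot zify.

Definition closeb (x y : nat) : bool := if odd x then x < y + 2 else x <= y + 2.

Lemma gg_cons x s : gg (x :: s) =
  mex1 [seq q.2 | q <- zip s (gg s) & closeb x q.1] :: gg s.
Proof. by []. Qed.

Lemma size_gg s : size (gg s) = size s.
Proof. by elim: s => //= x s ->. Qed.

Lemma mex1_notin L : mex1 L \notin L.
Proof.
rewrite /mex1.
set P := (fun n => n \notin L).
have hP : has P (iota 1 (size L).+1).
  apply/negPn/negP => /hasPn H.
  have : size (iota 1 (size L).+1) <= size L.
    apply: uniq_leq_size; first exact: iota_uniq.
    by move=> y /H; rewrite /P negbK.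
  by rewrite size_iota ltnn.
have := nth_find 0 hP.
rewrite nth_iota; last by move: hP; rewrite has_find size_iota.
by rewrite /P add1n.
Qed.

Lemma mex1_1 L : mex1 L != 1 -> 1 \in L.
Proof.
rewrite /mex1 eqSS => H.
have h0 : 0 < find (fun n => n \notin L) (iota 1 (size L).+1) by rewrite lt0n.
by have := before_find 0 h0; rewrite nth_iota //= => /negbFE.
Qed.

Lemma in_markL x s c : c \in [seq q.2 | q <- zip s (gg s) & closeb x q.1] <->
  exists y, (y, c) \in zip s (gg s) /\ closeb x y.
Proof.
split.
  by case/mapP => [[y d]]; rewrite mem_filter /= => /andP[h1 h2] ->; exists y.
by case=> y [h1 h2]; apply/mapP; exists (y, c) => //; rewrite mem_filter h2.
Qed.

Lemma zip_cons_in (x m : nat) (s t : seq nat) (v c : nat) : ((v, c) \in zip (x :: s) (m :: t)) =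
  ((v == x) && (c == m)) || ((v, c) \in zip s t).
Proof. by rewrite /= in_cons xpair_eqE. Qed.

Lemma zip_mem1 (s t : seq nat) (v c : nat) : (v, c) \in zip s t -> v \in s.
Proof.
elim: s t => [|x s IH] [|y t] //= ; rewrite in_cons xpair_eqE.
case/orP => [/andP[/eqP -> _]|/IH]; first by rewrite in_cons eqxx.
by rewrite in_cons => ->; rewrite orbT.
Qed.

Lemma mem_exists_mark s v : v \in s -> exists c, (v, c) \in zip s (gg s).
Proof.
elim: s => [|x s IH] //=; rewrite in_cons => /orP[/eqP ->|/IH [c hc]].
  by eexists; rewrite in_cons; apply/orP; left.
by exists c; rewrite in_cons hc orbT.
Qed.

Definition evens (s : seq nat) := all (fun x => ~~ odd x) s.

Lemma mark1_below s v c : sorted geq s -> evens s ->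
  (v, c) \in zip s (gg s) -> c != 1 ->
  exists y, (y, 1) \in zip s (gg s) /\ y <= v <= y + 2.
Proof.
elim: s v c => [|x s IH] v c //= Hs /andP[ex es].
rewrite in_cons xpair_eqE => /orP[/andP[/eqP ev /eqP ec]|hin] hc1.
  subst v c. have := mex1_1 _ hc1. case/in_markL => y [hy hcl].
  exists y; split; first by rewrite in_cons hy orbT.
  have yx : y <= x.
    have ys := zip_mem1 _ _ _ _ hy.
    have tr : transitive geq by move=> a b d h1 h2; exact: leq_trans h2 h1.
    have := order_path_min tr Hs. by move/allP/(_ _ ys).
  by move: hcl; rewrite /closeb (negbTE ex) yx.
have [y [hy hyv]] := IH _ _ (path_sorted Hs) es hin hc1.
by exists y; rewrite in_cons hy orbT.
Qed.

Lemma marked_in s x : x \in marked 2 s -> (x, 2) \in zip s (gg s).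
Proof. by case/mapP => [[y c]]; rewrite mem_filter /= => /andP[/eqP -> h] ->. Qed.

Lemma marked_sorted s : sorted geq s -> evens s ->
  sorted (fun a b => b + 2 < a) (marked 2 s).
Proof.
have tr : transitive (fun a b => b + 2 < a).
  by move=> a b d /= h1 h2; lia.
elim: s => [|x s IH] //= Hs /andP[ex es].
have IH' := IH (path_sorted Hs) es.
rewrite /marked gg_cons /=.
case: ifP => // /eqP h2.
change (sorted (fun a b => b + 2 < a) (x :: marked 2 s)).
rewrite /= (path_sortedE tr) IH' andbT.
apply/allP => y /marked_in hy.
case: (leqP x (y + 2)) => // hxy.
have : 2 \in [seq q.2 | q <- zip s (gg s) & closeb x q.1].
  by apply/in_markL; exists y; rewrite /closeb (negbTE ex) hxy.
by rewrite -h2 (negbTE (mex1_notin _)).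
Qed.

Lemma even2 a b : ~~ odd a -> ~~ odd b -> b <= a <= b + 2 -> a = b \/ a = b + 2.
Proof.
move=> ha hb /andP[h1 h2].
case: (ltngtP a b) => h; [lia| |by left].
have : a = b + 1 \/ a = b + 2 by lia.
case=> e; last by right.
by move: ha hb; rewrite e oddD /=; case: (odd b).
Qed.

Lemma two_marked_facts s x : sorted geq s -> evens s ->
  (x, 2) \in zip s (gg s) ->
  (has_marked s 1 x || has_marked s 1 (x - 2)) &&
  ((x + 2 \in s) ==> (has_marked s 1 x || has_marked s 1 (x + 2))).
Proof.
move=> Hs es hx.
have evin : forall v c, (v, c) \in zip s (gg s) -> ~~ odd v.
  by move=> v c h; apply: (allP es); exact: zip_mem1 h.
apply/andP; split.
  have [y [hy hyx]] := mark1_below _ _ _ Hs es hx isT.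
  case: (even2 _ _ (evin _ _ hx) (evin _ _ hy) hyx) => e.
    by rewrite /has_marked e hy.
  by rewrite /has_marked e addnK hy orbT.
apply/implyP => /mem_exists_mark [c hc].
case: (eqVneq c 1) => [e|ne].
  by move: hc; rewrite e /has_marked => ->; rewrite orbT.
have [y [hy hyx]] := mark1_below _ _ _ Hs es hc ne.
case: (even2 _ _ (evin _ _ hc) (evin _ _ hy) hyx) => e.
  by rewrite /has_marked e hy orbT.
by move/eqP: e; rewrite eqn_add2r => /eqP e; rewrite /has_marked e hy.
Qed.

Lemma stype_ok s b : sorted geq s -> evens s -> 1 <= b <= Nmark 2 s ->
  (stype_sigma s b).1 <> s_none.
Proof.
move=> Hs es /andP[b1 bN].
have hin : pi2 s b \in marked 2 s.
  rewrite /pi2; apply: mem_nth; rewrite -/(Nmark 2 s); lia.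
have := two_marked_facts _ _ Hs es (marked_in _ _ hin).
case: b b1 bN hin => [|[|b']] //= _ _ _.
  case: (has_marked s 1 (pi2 s 1 - 1)); case: (has_marked s 1 (pi2 s 1 - 2));
  case: (has_marked s 1 (pi2 s 1 + 2)); case: (has_marked s 1 (pi2 s 1));
  by case: (pi2 s 1 + 2 \in s).
case: (has_marked s 1 (pi2 s b'.+2 - 1)); case: (has_marked s 1 (pi2 s b'.+2 - 2));
case: (has_marked s 1 (pi2 s b'.+2 + 2)); case: (has_marked s 1 (pi2 s b'.+2));
case: (pi2 s b'.+2 + 2 \in s); case: eqP => //=.
Qed.

Lemma lidx_evens s : evens s -> lidx s = Nmark 2 s.
Proof.
move=> es; rewrite /lidx.
have h : okl s =1 predT.
  move=> j; rewrite /okl /=; apply/orP; right; apply/allP => x hx.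
  by rewrite (negbTE (allP es x hx)).
rewrite (eq_filter h) filter_predT -addn1 iotaD last_cat /=.
by [].
Qed.

Lemma bound_sorted (M : seq nat) : sorted (fun a b => b + 2 < a) M ->
  all (fun x => 0 < x) M -> forall i, i < size M -> 2 * (size M - i) - 1 <= nth 0 M i.
Proof.
have tr : transitive (fun a b => b + 2 < a) by move=> a b d /= h1 h2; lia.
elim: M => [|a M IH] //= hs /andP[ha hM] [|i] hi /=.
  case: M IH hs hM hi => [|b M] IH hs hM hi /=; first by lia.
  have := IH (path_sorted hs) hM 0 isT => /=.
  move: hs => /= /andP[hab _]; lia.
have := IH (path_sorted hs) hM i hi; lia.
Qed.

Lemma stype_not_m1 s b : (stype_sigma s b).1 <> s_m1.
Proof. by case: b => [|[|b]] //=; repeat case: ifP => //. Qed.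

Lemma start_type_cases s b : sorted geq s -> evens s -> 1 <= b <= Nmark 2 s ->
  (start_type s b = s_2 \/ start_type s b = s_3) \/
  (start_type s b = s_0 \/ start_type s b = s_1).
Proof.
move=> Hs es hb.
rewrite /start_type lidx_evens // (_ : b <= Nmark 2 s); last by case/andP: hb.
have := stype_ok _ _ Hs es hb; have := stype_not_m1 s b.
by case: (stype_sigma s b).1; auto.
Qed.

Theorem theorem5p3 (k r m : nat) (s : seq nat) :
  3 <= r -> r <= k ->
  inC k r s ->
  (forall x, x \in s -> ~~ odd x) ->
  (inClt_m k r m s <-> Nmark 2 s <= m).
Proof.
move=> hr hk hC hev.
have [/andP[Hs Hpos] _] := hC.
have es : evens s by apply/allP.
have tr : transitive (fun a b : nat => b + 2 < a) by move=> a b d /= h1 h2; lia.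
have Msort := marked_sorted _ Hs es.
have Mpos : all (fun x => 0 < x) (marked 2 s).
  apply/allP => x /(marked_in _ _) /(zip_mem1 _ _ _ _) hx; exact: (allP Hpos).
have Hbound := bound_sorted _ Msort Mpos.
split.
  case=> p [t [pt [_ [_ [pN [_ [hp1 _]]]]]]].
  case: (ltngtP p (Nmark 2 s)) => [hpN|hpN|e]; last by rewrite -e -pt leq_addr.
    2: by move: pN; rewrite leqNgt hpN.
  case: hp1 => [e|h]; first by move: hpN; rewrite e ltnn.
  have := Hbound p hpN; rewrite -/(Nmark 2 s) -/(pi2 s p.+1); lia.
move=> hNm.
set N := Nmark 2 s.
pose P := fun p => (p <= N) && ((p == 0) || (2 * m + 2 <= pi2 s p + 2 * p)).
have exP : exists p, P p by exists 0.
have ubP : forall p, P p -> p <= N by move=> p /andP[].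
case: (ex_maxnP exP ubP) => p0 /andP[hp0N hp0] hmax.
have hnext : p0 < N -> pi2 s p0.+1 + 2 * p0.+1 < 2 * m + 2.
  move=> hlt; rewrite ltnNge; apply/negP => hle.
  have : P p0.+1 by rewrite /P hlt hle orbT.
  by move/hmax; rewrite ltnn.
have hgap : forall p, 2 <= p <= N -> pi2 s p + 2 < pi2 s p.-1.
  move=> p /andP[h2 hN].
  have := sorted_ltn_nth tr 0 Msort (p.-2) (p.-1).
  rewrite /pi2; apply; rewrite ?inE -/(Nmark 2 s) -/N; lia.
have hpm : p0 <= m by lia.
case: (boolP [&& 1 <= p0 & pi2 s p0 == 2 * (m - p0) + 2]) => [/andP[h1 /eqP he]|hne].
  have hb : 1 <= p0 <= N by rewrite h1 hp0N.
  case: (start_type_cases _ _ Hs es hb) => hty.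
    exists p0, (m - p0); split; first by lia.
    split=> //; split; first by move=> x /hev /negbTE ->.
    split=> //; split; first by right; lia.
    split; first by case: (ltngtP p0 N) => h; [right; have := hnext h; lia|lia|left].
    split; first by move=> _ _.
    move=> hl he2; have := hnext hl; lia.
  exists p0.-1, (m - p0).+1; split; first by lia.
  split=> //; split; first by move=> x /hev /negbTE ->.
  split; first by lia.
  split.
    case: (ltngtP p0 1) => h; [lia| |left; lia].
    right; have := hgap p0; rewrite h hp0N => /(_ isT); lia.
  split; first by right; rewrite prednK; lia.
  split.
    move=> h e; have := hgap p0; rewrite hp0N; case: (ltngtP p0 1) => h'; [lia| |lia].
    move=> /(_ isT); lia.
  by move=> _; rewrite prednK //; lia.
exists p0, (m - p0); split; first by lia.
split=> //; split; first by move=> x /hev /negbTE ->.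
split=> //; split.
  case/orP: hp0 => [/eqP ->|h]; [by left|right; lia].
split; first by case: (ltngtP p0 N) => h; [right; have := hnext h; lia|lia|left].
split.
  move=> h1 he; move: hne; rewrite h1 he; lia.
move=> hl he2; have := hnext hl; lia.
Qed.
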